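(* Let $G$ be a subgroup of the affine group $\mathcal G$ with a unitary representation $G\ni g\mapsto U_g$ on a separable Hilbert space $\mathcal H$, and let $\dot A$ be a closed densely defined symmetric operator in $\mathcal H$ which is $G$-invariant with respect to this representation. Suppose that $A$ is a maximal dissipative extension of $\dot A$. Then for every $g\in G$ the restriction $A_g=(\dot A)^*|_{D_g}$ of the adjoint operator $(\dot A)^*$ to $D_g=U_g(\mathrm{Dom}(A))$ is a maximal dissipative extension of $\dot A$.
   Context: $\mathcal G$ denotes the group (under composition) of affine maps $g(x)=ax+b$ of $\mathbb R$ with $a>0$, $b\in\mathbb R$. For an operator $A$ and $g(x)=ax+b$, $g(A)$ denotes $aA+bI$. A densely defined closed operator $A$ is called $G$-invariant (with respect to a unitary representation $g\mapsto U_g$ of a subgroup $G\subset\mathcal G$) if for all $g\in G$ one has $U_g(\mathrm{Dom}(A))=\mathrm{Dom}(A)$ and $U_gAU_g^*f=aAf+bf$ for all $f\in\mathrm{Dom}(A)$, where $g(x)=ax+b$. An operator is dissipative if $\operatorname{Im}(Af,f)\ge0$ on its domain, and maximal dissipative if it has no proper dissipative extension. *)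

(* Defs.v *)
From HB Require Import structures.
From mathcomp Require Import all_boot all_order all_algebra.
From mathcomp Require Import reals.
From mathcomp.real_closed Require Import complex.
From Stdlib Require Import ClassicalEpsilon.
Set Implicit Arguments. Unset Strict Implicit. Unset Printing Implicit Defensive.
Import Order.TTheory GRing.Theory Num.Theory.
Local Open Scope ring_scope.
Local Open Scope complex_scope.

Section Hilbert.
Variables (R : realType) (H : lmodType R[i]) (ip : H -> H -> R[i]).

Definition is_inner_product : Prop :=
  [/\ forall (a : R[i]) x y z, ip (a *: x + y) z = a * ip x z + ip y z,
      forall x y, ip y x = conjc (ip x y),
      forall x, 0 <= complex.Re (ip x x) /\ complex.Im (ip x x) = 0
    & forall x, ip x x = 0 -> x = 0].

Definition hnorm (x : H) : R := Num.sqrt (complex.Re (ip x x)).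

Definition hconv (u : nat -> H) (x : H) : Prop :=
  forall e : R, 0 < e -> exists N, forall n, (N <= n)%N -> hnorm (u n - x) < e.

Definition hcauchy (u : nat -> H) : Prop :=
  forall e : R, 0 < e -> exists N, forall m n, (N <= m)%N -> (N <= n)%N ->
    hnorm (u m - u n) < e.

Definition hdense (D : H -> Prop) : Prop :=
  forall x (e : R), 0 < e -> exists y, D y /\ hnorm (x - y) < e.

Definition is_separable_hilbert : Prop :=
  [/\ is_inner_product,
      forall u, hcauchy u -> exists x, hconv u x
    & exists s : nat -> H, hdense (fun y => exists n, y = s n)].

Record op := Op { dom : H -> Prop; app : H -> H }.

Definition is_linop (A : op) : Prop :=
  [/\ dom A 0,
      forall (a : R[i]) x y, dom A x -> dom A y -> dom A (a *: x + y)
    & forall (a : R[i]) x y, dom A x -> dom A y ->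
        app A (a *: x + y) = a *: app A x + app A y].

Definition densely_defined (A : op) : Prop := hdense (dom A).

Definition closed_op (A : op) : Prop :=
  forall (u : nat -> H) x y, (forall n, dom A (u n)) -> hconv u x ->
    hconv (fun n => app A (u n)) y -> dom A x /\ app A x = y.

Definition symmetric_op (A : op) : Prop :=
  densely_defined A /\
  forall f g, dom A f -> dom A g -> ip (app A f) g = ip f (app A g).

Definition op_adjoint (A : op) : op :=
  Op (fun g => exists h, forall f, dom A f -> ip (app A f) g = ip f h)
     (fun g => epsilon (inhabits 0)
                 (fun h => forall f, dom A f -> ip (app A f) g = ip f h)).

Definition op_restrict (A : op) (D : H -> Prop) : op := Op D (app A).

Definition extends (A B : op) : Prop :=
  (forall f, dom A f -> dom B f) /\ (forall f, dom A f -> app B f = app A f).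

Definition dissipative (A : op) : Prop :=
  forall f, dom A f -> 0 <= complex.Im (ip (app A f) f).

Definition maximal_dissipative (A : op) : Prop :=
  [/\ is_linop A, dissipative A &
      forall B, is_linop B -> dissipative B -> extends A B ->
        forall f, dom B f -> dom A f].

Definition himage (U : H -> H) (D : H -> Prop) : H -> Prop :=
  fun y => exists x, D x /\ y = U x.

(** Affine maps g(x) = a x + b, a > 0, encoded as pairs (a, b). *)
Definition aff_comp (g h : R * R) : R * R := (g.1 * h.1, g.1 * h.2 + g.2).
Definition aff_inv (g : R * R) : R * R := (g.1^-1, - (g.2 / g.1)).

Definition affine_subgroup (G : R * R -> Prop) : Prop :=
  [/\ forall g, G g -> 0 < g.1,
      G (1, 0),
      forall g h, G g -> G h -> G (aff_comp g h)
    & forall g, G g -> G (aff_inv g)].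

Definition is_adjoint_map (T S : H -> H) : Prop :=
  forall x y, ip (T x) y = ip x (S y).

Definition unitary (T : H -> H) : Prop :=
  [/\ forall (a : R[i]) x y, T (a *: x + y) = a *: T x + T y,
      forall x y, ip (T x) (T y) = ip x y
    & forall y, exists x, T x = y].

Definition unitary_rep (G : R * R -> Prop) (U : R * R -> H -> H) : Prop :=
  [/\ forall g, G g -> unitary (U g),
      forall x, U (1, 0) x = x
    & forall g h, G g -> G h -> forall x, U (aff_comp g h) x = U g (U h x)].

Definition G_invariant (G : R * R -> Prop) (U : R * R -> H -> H) (A : op) : Prop :=
  forall g, G g ->
    (forall y, dom A y <-> himage (U g) (dom A) y) /\
    (forall S, is_adjoint_map (U g) S -> forall f, dom A f ->
       U g (app A (S f)) = (g.1)%:C *: app A f + (g.2)%:C *: f).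

End Hilbert.

(* Main.v *)
Require Import Defs.
From HB Require Import structures.
From mathcomp Require Import all_boot all_order all_algebra.
From mathcomp Require Import reals.
From mathcomp.real_closed Require Import complex.
From Stdlib Require Import ClassicalEpsilon.
From mathcomp Require Import ring lra.
Import Order.TTheory GRing.Theory Num.Theory.
Set Implicit Arguments. Unset Strict Implicit.
Local Open Scope ring_scope.
Local Open Scope complex_scope.

Section Aux.
Variables (R : realType).

Lemma lin_zero (k C : R) : (forall s : R, 0 <= s * k + C) -> k = 0.
Proof.
move=> h; apply/eqP; apply/negPn/negP => kn0.
have := h (- (C + 1) / k).
rewrite divfK //; lra.
Qed.

Lemma key (p w v c : R[i]) : complex.Im p = 0 ->
  (forall lam : R[i], 0 <= complex.Im (lam * conjc lam * p + lam * w + conjc lam * v + c))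
  -> w = conjc v.
Proof.
case: p => p1 p2; case: w => w1 w2; case: v => v1 v2; case: c => c1 c2 /= -> h.
have h1 : w2 + v2 = 0.
  apply: (@lin_zero _ c2) => s; have := h (Complex s 0) => /=.
  congr (_ <= _); ring.
have h2 : w1 - v1 = 0.
  apply: (@lin_zero _ c2) => s; have := h (Complex 0 s) => /=.
  congr (_ <= _); ring.
congr Complex; lra.
Qed.

Lemma Im_realM (r : R) (z : R[i]) : complex.Im (r%:C * z) = r * complex.Im z.
Proof. case: z => x y /=; ring. Qed.

Lemma conjcD (x y : R[i]) : conjc (x + y) = conjc x + conjc y.
Proof. case: x => ??; case: y => ?? /=; congr Complex; ring. Qed.

Lemma conjcM (x y : R[i]) : conjc (x * y) = conjc x * conjc y.
Proof. case: x => ??; case: y => ?? /=; congr Complex; ring. Qed.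

Lemma conjcN (x : R[i]) : conjc (- x) = - conjc x.
Proof. case: x => ?? /=; congr Complex; ring. Qed.

Lemma conjcKK (x : R[i]) : conjc (conjc x) = x.
Proof. case: x => ?? /=; congr Complex; ring. Qed.

Lemma conjcR (r : R) : conjc (r%:C) = r%:C.
Proof. rewrite /= oppr0 //. Qed.

Lemma Im_conj (z : R[i]) : complex.Im (conjc z) = - complex.Im z.
Proof. by case: z. Qed.

End Aux.

Section IP.
Variables (R : realType) (H : lmodType R[i]) (ip : H -> H -> R[i]).
Hypothesis hip : is_inner_product ip.

Lemma ipDZl a x y z : ip (a *: x + y) z = a * ip x z + ip y z.
Proof. by case: hip. Qed.

Lemma ipC x y : ip y x = conjc (ip x y).
Proof. by case: hip. Qed.

Lemma ip0l z : ip 0 z = 0.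
Proof.
have := ipDZl 1 0 0 z; rewrite scaler0 addr0 mul1r => e.
by apply: (addrI (ip 0 z)); rewrite -e addr0.
Qed.

Lemma ipZl a x z : ip (a *: x) z = a * ip x z.
Proof. by have := ipDZl a x 0 z; rewrite addr0 ip0l addr0. Qed.

Lemma ipDl x y z : ip (x + y) z = ip x z + ip y z.
Proof. by have := ipDZl 1 x y z; rewrite scale1r mul1r. Qed.

Lemma ipDZr a x y z : ip x (a *: y + z) = conjc a * ip x y + ip x z.
Proof. by rewrite ipC ipDZl conjcD conjcM -!ipC. Qed.

Lemma ipZr a x y : ip x (a *: y) = conjc a * ip x y.
Proof. by rewrite ipC ipZl conjcM -ipC. Qed.

Lemma ipDr x y z : ip x (y + z) = ip x y + ip x z.
Proof. by rewrite ipC ipDl conjcD -!ipC. Qed.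

Lemma ipNr x y : ip x (- y) = - ip x y.
Proof. by rewrite -scaleN1r ipZr conjcN /= oppr0 mulN1r. Qed.

Lemma ipNl x y : ip (- x) y = - ip x y.
Proof. by rewrite -scaleN1r ipZl mulN1r. Qed.

Lemma ip_self_Im x : complex.Im (ip x x) = 0.
Proof. by case: hip => _ _ /(_ x) []. Qed.

Lemma ip_self_Re x : 0 <= complex.Re (ip x x).
Proof. by case: hip => _ _ /(_ x) []. Qed.

Lemma ip_uniq0 (D : H -> Prop) h : hdense ip D -> (forall f, D f -> ip f h = 0) -> h = 0.
Proof.
move=> dD hD.
have hh : forall f, D f -> complex.Re (ip h h) <= complex.Re (ip (h - f) (h - f)).
  move=> f Df.
  rewrite ipDl !ipDr !ipNl !ipNr (hD _ Df) [ip h f]ipC (hD _ Df) /= oppr0.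
  rewrite !subr0 opprK.
  have := ip_self_Re f.
  case: (ip h h) => ??; case: (ip f f) => ?? /=; lra.
have r0 : complex.Re (ip h h) = 0.
  apply/eqP; rewrite eq_le ip_self_Re andbT; rewrite leNgt; apply/negP => rp.
  have sp : 0 < Num.sqrt (complex.Re (ip h h)) by rewrite sqrtr_gt0.
  have [f [Df]] := dD h _ sp.
  rewrite /hnorm ltr_sqrt // => lt.
  have := hh _ Df; lra.
case: hip => _ _ _; apply.
move: (ip_self_Im h) r0; case: (ip h h) => ?? /= -> ->; done.
Qed.

Lemma ip_uniq (D : H -> Prop) h1 h2 : hdense ip D ->
  (forall f, D f -> ip f h1 = ip f h2) -> h1 = h2.
Proof.
move=> dD e; apply/eqP; rewrite -subr_eq0; apply/eqP; apply: (@ip_uniq0 D _ dD).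
by move=> f Df; rewrite ipDr ipNr e // subrr.
Qed.
Lemma adj_app (Ad : op H) g h : hdense ip (dom Ad) ->
  (forall f, dom Ad f -> ip (app Ad f) g = ip f h) ->
  app (op_adjoint ip Ad) g = h.
Proof.
move=> dD Hh /=.
set P := (fun h0 => forall f, dom Ad f -> ip (app Ad f) g = ip f h0).
have := epsilon_spec (inhabits 0) P (ex_intro _ h Hh).
move=> He; apply: (@ip_uniq _ _ _ dD) => f Df; rewrite -He //; exact: Hh.
Qed.

Lemma diss_adj (Ad A : op H) : symmetric_op ip Ad -> extends Ad A -> is_linop A ->
  dissipative ip A -> forall h, dom A h -> forall f, dom Ad f ->
  ip (app Ad f) h = ip f (app A h).
Proof.
move=> [_ sym] [eD eA] [_ lD lA] dA h Dh f Df.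
rewrite [ip f _]ipC.
apply: (@key _ (ip (app Ad f) f) _ _ (ip (app A h) h)).
  have e : ip (app Ad f) f = conjc (ip (app Ad f) f) by rewrite -ipC sym.
  move: e; case: (ip (app Ad f) f) => ?? /= [] ; lra.
move=> lam; have := dA _ (lD lam _ _ (eD _ Df) Dh).
rewrite lA; [|exact: eD|exact: Dh].
rewrite (eA _ Df) ipDZl !ipDZr.
congr (_ <= complex.Im _); ring.
Qed.
Lemma unit_lin (T : H -> H) : unitary ip T -> forall a x y, T (a *: x + y) = a *: T x + T y.
Proof. by case. Qed.
Lemma unit_iso (T : H -> H) : unitary ip T -> forall x y, ip (T x) (T y) = ip x y.
Proof. by case. Qed.
Lemma unit0 (T : H -> H) : unitary ip T -> T 0 = 0.
Proof.
move=> uT; have := unit_lin uT 1 0 0; rewrite scaler0 addr0 scale1r => e.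
by apply: (addrI (T 0)); rewrite -e addr0.
Qed.
End IP.

Lemma ImD (R : realType) (u v : R[i]) : complex.Im (u + v) = complex.Im u + complex.Im v.
Proof. by case: u; case: v. Qed.

Lemma alg4 (R : realType) (V : lmodType R[i]) (c1 c2 c : R[i]) (p1 p2 x1 x2 : V) :
  c1 *: (c *: p1 + p2) + c2 *: (c *: x1 + x2) = c *: (c1 *: p1 + c2 *: x1) + (c1 *: p2 + c2 *: x2).
Proof.
rewrite !scalerDr !scalerA [c1 * c]mulrC [c2 * c]mulrC; exact: addrACA.
Qed.



Theorem lemma3p1 (R : realType) (H : lmodType R[i]) (ip : H -> H -> R[i])
  (G : R * R -> Prop) (U : R * R -> H -> H) (Adot A : op H) :
  is_separable_hilbert ip ->
  affine_subgroup G ->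
  unitary_rep ip G U ->
  is_linop Adot -> closed_op ip Adot -> symmetric_op ip Adot ->
  G_invariant ip G U Adot ->
  extends Adot A -> maximal_dissipative ip A ->
  forall g, G g ->
    let Ag := op_restrict (op_adjoint ip Adot) (himage (U g) (dom A)) in
    (forall f, himage (U g) (dom A) f -> dom (op_adjoint ip Adot) f) /\
    extends Adot Ag /\ maximal_dissipative ip Ag.
Proof.
move=> hH hG hU linD clD symD invD extA [linA dissA maxA] g Gg Ag.
have hip : is_inner_product ip by case: hH.
case: hG => apos G1 Gcomp Ginv.
case: hU => Uun U1 Ucomp.
have a0 : 0 < g.1 by exact: apos.
have a0' : g.1 != 0 by rewrite lt0r_neq0.
set gi := aff_inv g.
have Ggi : G gi by exact: Ginv.
have Ugi : forall x, U g (U gi x) = x.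
  move=> x; rewrite -Ucomp //.
  have -> : aff_comp g gi = (1, 0) by rewrite /aff_comp /gi /aff_inv /=; congr (_, _); field.
  exact: U1.
have Ugi' : forall x, U gi (U g x) = x.
  move=> x; rewrite -Ucomp //.
  have -> : aff_comp gi g = (1, 0) by rewrite /aff_comp /gi /aff_inv /=; congr (_, _); field.
  exact: U1.
have ug := Uun _ Gg; have ugi := Uun _ Ggi.
have adjg : forall x y, ip (U g x) y = ip x (U gi y).
  by move=> x y; rewrite -{1}(Ugi y) (unit_iso ug).
have adjgi : forall x y, ip (U gi x) y = ip x (U g y).
  by move=> x y; rewrite -{1}(Ugi' y) (unit_iso ugi).
case: (invD g Gg) => domg _.
case: (invD gi Ggi) => _ appgi.
have appgi' := appgi (U g) adjgi.
set c1 := (gi.1)%:C; set c2 := (gi.2)%:C.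
have K : forall x, dom A x -> forall f, dom Adot f ->
    ip (app Adot f) (U g x) = ip f (U g (c1 *: app A x + c2 *: x)).
  move=> x Dx f Df; have [f' [Df' ->]] := (domg f).1 Df.
  rewrite -{1}(Ugi (app Adot (U g f'))) !(unit_iso ug) appgi' //.
  rewrite (ipDZl hip) (ipZl hip) (ipDZr hip) (ipZr hip) /c1 /c2 !conjcR.
  by rewrite (diss_adj hip symD extA linA dissA Dx Df').
have dD : hdense ip (dom Adot) by case: symD.
have AdjU : forall x, dom A x ->
    app (op_adjoint ip Adot) (U g x) = U g (c1 *: app A x + c2 *: x).
  by move=> x Dx; apply: (adj_app hip dD) => f Df; exact: K.
have lg := unit_lin ug; have lgi := unit_lin ugi.
case: linA => lA0 lAD lAA.
have appAg : forall y, app Ag y = app (op_adjoint ip Adot) y by [].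
split.
  move=> f [x [Dx ->]] /=; exists (U g (c1 *: app A x + c2 *: x)); exact: K.
split.
  split.
    move=> f Df; have [f' [Df' ->]] := (domg f).1 Df; exists f'; split => //.
    by case: extA => + _; apply.
  move=> f Df /=; apply: (adj_app hip dD) => f0 Df0.
  by case: symD => _; apply.
split.
- split.
  + by exists 0; split => //; rewrite (unit0 ug).
  + move=> c y1 y2 [x1 [D1 ->]] [x2 [D2 ->]]; exists (c *: x1 + x2); split.
      exact: lAD.
    by rewrite lg.
  + move=> c y1 y2 [x1 [D1 ->]] [x2 [D2 ->]].
    rewrite !appAg -lg !AdjU //; last exact: lAD.
    by rewrite -lg lAA // alg4.
- move=> y [x [Dx ->]].
  rewrite appAg AdjU // (unit_iso ug) (ipDZl hip) (ipZl hip) ImD !Im_realM (ip_self_Im hip) mulr0 addr0.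
  apply: mulr_ge0; last exact: dissA.
  by rewrite /gi /aff_inv /= invr_ge0 ltW.
- move=> B [lB0 lBD lBA] dissB [eBD eBA] f Df.
  pose B' := Op (fun x => dom B (U g x))
                (fun x => (g.1)%:C *: U gi (app B (U g x)) + (g.2)%:C *: x).
  have hB' : dom A (U gi f).
    apply: (maxA B'); last by rewrite /= Ugi.
    + split => /=.
      * by rewrite (unit0 ug).
      * by move=> c x y Dx Dy; rewrite lg; apply: lBD.
      * move=> c x y Dx Dy; rewrite lg lBA // lgi; exact: alg4.
    + move=> x /= Dx.
      rewrite (ipDZl hip) (ipZl hip) adjgi ImD !Im_realM (ip_self_Im hip) mulr0 addr0.
      by apply: mulr_ge0; [rewrite ltW | exact: dissB].
    + split.
        by move=> x Dx /=; apply: eBD; exists x.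
      move=> x Dx /=; rewrite eBA; last by exists x.
      rewrite appAg AdjU // Ugi' scalerDr !scalerA -addrA -scalerDl.
      have -> : (g.1)%:C * c1 = 1.
        by rewrite /c1 /gi /aff_inv /= -rmorphM mulfV.
      have -> : (g.1)%:C * c2 + (g.2)%:C = 0.
        by rewrite /c2 /gi /aff_inv /= -rmorphM -rmorphD; congr (_%:C); field.
      by rewrite scale0r addr0 scale1r.
  by exists (U gi f); split => //; rewrite Ugi.
Qed.
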